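(* Let $G=(V,q)$ be a reversible connected graph and let $x_0\neq y_0\in V$. Then there exists an optimal transport plan $\rho$ from $x_0$ to $y_0$ such that (1) $\mu_\rho(k)=0$ for all integers $k$ with $|k|>1$, and (2) $\mu_\rho(-1)\ge 2q_{\min}$. Moreover, every optimal transport plan $\rho$ from a vertex $x_0$ to itself satisfies $\mu_\rho(k)=0$ for all $k\neq 0$.
   Context: A graph $G=(V,q)$ consists of a countable set $V$ and a function $q:V\times V\to[0,\infty)$ such that $\#\{y:q(x,y)>0\}<\infty$ for every $x\in V$. $G$ is reversible if there is $m:V\to(0,\infty)$ with $q(x,y)m(x)=q(y,x)m(y)$ for all $x,y$. For reversible $G$ write $x\sim y$ if $q(x,y)>0$, and let $d$ be the combinatorial distance $d(x,y)=\inf\{n: x=x_0\sim x_1\sim\dots\sim x_n=y\}$; connected means $d$ is finite. $q_{\min}:=\inf\{q(x,y): q(x,y)>0\}$. A transport plan from $x_0$ to $y_0$ is a map $\rho:V\times V\to[0,\infty)$ with $\sum_{y}\rho(x,y)=q(x_0,x)$ for all $x\neq x_0$ and $\sum_x\rho(x,y)=q(y_0,y)$ for all $y\ne y_0$. Its cost is $\mathrm{cost}(\rho)=\sum_{x,y}\rho(x,y)\big(d(x_0,y_0)-d(x,y)\big)$, and for $k\in\mathbb Z$, $\mu_\rho(k)=\sum_{x,y:\ d(x,y)-d(x_0,y_0)=k}\rho(x,y)$. A transport plan from $x_0$ to $y_0$ is optimal if it maximizes the cost among all transport plans from $x_0$ to $y_0$. *)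

(* Defs.v *)
From Stdlib Require Import Reals ZArith List Classical ClassicalEpsilon.
Import ListNotations.
Open Scope R_scope.

(* Unconditional (unordered) sum of a family f : A -> R over an arbitrary
   (countable) index type A: the net of finite partial sums over finite
   subsets (NoDup lists) converges to s. *)
Definition finsum {A : Type} (f : A -> R) (l : list A) : R :=
  fold_right (fun a acc => f a + acc) 0 l.

Definition HasSum {A : Type} (f : A -> R) (s : R) : Prop :=
  forall eps, 0 < eps ->
    exists l0 : list A, forall l : list A,
      NoDup l -> incl l0 l -> Rabs (finsum f l - s) < eps.

Inductive walk {V : Type} (q : V -> V -> R) : V -> V -> nat -> Prop :=
| walk0 : forall x, walk q x x 0
| walkS : forall x z y n, 0 < q x z -> walk q z y n -> walk q x y (S n).

Definition is_dist {V : Type} (q : V -> V -> R) (x y : V) (n : nat) : Prop :=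
  walk q x y n /\ forall m, walk q x y m -> (n <= m)%nat.

(* Combinatorial distance (meaningful on connected graphs). *)
Definition dist {V : Type} (q : V -> V -> R) (x y : V) : nat :=
  epsilon (inhabits 0%nat) (fun n => is_dist q x y n).

Definition connected {V : Type} (q : V -> V -> R) : Prop :=
  forall x y : V, exists n, walk q x y n.

Definition reversible {V : Type} (q : V -> V -> R) : Prop :=
  exists m : V -> R, (forall x, 0 < m x) /\
    (forall x y, q x y * m x = q y x * m y).

Definition is_glb (E : R -> Prop) (m : R) : Prop :=
  (forall r, E r -> m <= r) /\ (forall b, (forall r, E r -> b <= r) -> b <= m).

Definition qmin {V : Type} (q : V -> V -> R) : R :=
  epsilon (inhabits 0) (is_glb (fun r => exists x y, 0 < q x y /\ r = q x y)).

Definition transport_plan {V : Type} (q : V -> V -> R) (x0 y0 : V)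
  (rho : V -> V -> R) : Prop :=
  (forall x y, 0 <= rho x y) /\
  (forall x, x <> x0 -> HasSum (fun y => rho x y) (q x0 x)) /\
  (forall y, y <> y0 -> HasSum (fun x => rho x y) (q y0 y)).

Definition cost_family {V : Type} (q : V -> V -> R) (x0 y0 : V)
  (rho : V -> V -> R) : V * V -> R :=
  fun p => rho (fst p) (snd p) *
           (INR (dist q x0 y0) - INR (dist q (fst p) (snd p))).

Definition mu_family {V : Type} (q : V -> V -> R) (x0 y0 : V)
  (rho : V -> V -> R) (k : Z) : V * V -> R :=
  fun p => if Z.eq_dec (Z.of_nat (dist q (fst p) (snd p))
                         - Z.of_nat (dist q x0 y0))%Z k
           then rho (fst p) (snd p) else 0.

Definition optimal_plan {V : Type} (q : V -> V -> R) (x0 y0 : V)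
  (rho : V -> V -> R) : Prop :=
  transport_plan q x0 y0 rho /\
  exists c, HasSum (cost_family q x0 y0 rho) c /\
    forall rho' c', transport_plan q x0 y0 rho' ->
      HasSum (cost_family q x0 y0 rho') c' -> c' <= c.

(* Main.v *)
From Stdlib Require Import Reals ZArith List Lia Lra Classical ClassicalEpsilon.
Require Import Defs.
Import ListNotations.
Open Scope R_scope.


Definition deq {A} (a b : A) : {a = b} + {a <> b} := excluded_middle_informative (a = b).

Lemma finsum_app {A} (f : A -> R) l1 l2 : finsum f (l1 ++ l2) = finsum f l1 + finsum f l2.
Proof. induction l1; simpl; [lra| rewrite IHl1; lra]. Qed.

Lemma finsum_map {A B} (f : B -> R) (g : A -> B) l : finsum f (map g l) = finsum (fun a => f (g a)) l.
Proof. induction l; simpl; [lra| rewrite IHl; lra]. Qed.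

Lemma finsum_ext {A} (f g : A -> R) l : (forall a, In a l -> f a = g a) -> finsum f l = finsum g l.
Proof. induction l; simpl; intros H; [lra|]. rewrite H, IHl; auto. Qed.

Lemma finsum_le {A} (f g : A -> R) l : (forall a, In a l -> f a <= g a) -> finsum f l <= finsum g l.
Proof. induction l; simpl; intros H; [lra|]. assert (f a <= g a) by auto. assert (finsum f l <= finsum g l) by auto. lra. Qed.

Lemma finsum_plus {A} (f g : A -> R) l : finsum (fun a => f a + g a) l = finsum f l + finsum g l.
Proof. induction l; simpl; [lra| rewrite IHl; lra]. Qed.

Lemma finsum_minus {A} (f g : A -> R) l : finsum (fun a => f a - g a) l = finsum f l - finsum g l.
Proof. induction l; simpl; [lra| rewrite IHl; lra]. Qed.

Lemma finsum_scal {A} (c : R) (f : A -> R) l : finsum (fun a => c * f a) l = c * finsum f l.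
Proof. induction l; simpl; [lra| rewrite IHl; lra]. Qed.

Lemma finsum_zero {A} (f : A -> R) l : (forall a, In a l -> f a = 0) -> finsum f l = 0.
Proof. induction l; simpl; intros H; [lra|]. rewrite H, IHl; auto; lra. Qed.

Lemma finsum_nonneg {A} (f : A -> R) l : (forall a, In a l -> 0 <= f a) -> 0 <= finsum f l.
Proof. intros H. assert (finsum (fun _ => 0) l <= finsum f l) by (apply finsum_le; auto).
  rewrite finsum_zero in H0; auto. Qed.

Lemma finsum_perm {A} (f : A -> R) l1 : forall l2, NoDup l1 -> NoDup l2 ->
  (forall a, f a <> 0 -> (In a l1 <-> In a l2)) -> finsum f l1 = finsum f l2.
Proof.
  induction l1 as [|a l1 IH]; intros l2 N1 N2 H; simpl.
  - symmetry; apply finsum_zero. intros b Hb. destruct (Req_dec (f b) 0); auto.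
    apply H in H0. apply H0 in Hb. destruct Hb.
  - inversion N1; subst.
    destruct (classic (In a l2)) as [Ha|Ha].
    + destruct (in_split a l2 Ha) as [u [v ->]].
      rewrite finsum_app; simpl.
      assert (finsum f l1 = finsum f (u ++ v)).
      { apply IH; auto. eapply NoDup_remove_1; eauto.
        intros b Hb. specialize (H b Hb). rewrite !in_app_iff in *. simpl in H.
        split; intros Hb2.
        - assert (b <> a) by (intro; subst; auto).
          destruct (proj1 H (or_intror Hb2)) as [|[|]]; auto; congruence.
        - assert (b <> a). { intro; subst. apply (NoDup_remove_2 _ _ _ N2). rewrite in_app_iff; auto. }
          destruct (proj2 H (ltac:(destruct Hb2; auto))) as [|]; auto; congruence. }
      rewrite H0, finsum_app. lra.
    + assert (f a = 0). { destruct (Req_dec (f a) 0); auto. exfalso. apply Ha, (H a H0); simpl; auto. }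
      rewrite H0, (IH l2); auto; [lra|].
      intros b Hb. specialize (H b Hb). simpl in H. split; intros Hb2.
      * apply H; auto.
      * destruct (proj2 H Hb2); auto. subst. congruence.
Qed.

Lemma HasSum_fin {A} (f : A -> R) l : NoDup l -> (forall a, ~ In a l -> f a = 0) ->
  HasSum f (finsum f l).
Proof.
  intros N H eps Heps. exists l. intros l' N' I.
  rewrite (finsum_perm f l' l); auto.
  - rewrite Rminus_diag, Rabs_R0; auto.
  - intros a Ha. split; auto. intro. destruct (classic (In a l)); auto. exfalso; auto.
Qed.

Lemma nodup_ex {A} (l : list A) : exists l', NoDup l' /\ forall a, In a l' <-> In a l.
Proof. exists (nodup deq l). split; [apply NoDup_nodup|]. intros; apply nodup_In. Qed.

Lemma HasSum_unique {A} (f : A -> R) s t : HasSum f s -> HasSum f t -> s = t.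
Proof.
  intros Hs Ht. destruct (Req_dec s t) as [|Hne]; auto. exfalso.
  set (e := Rabs (s - t) / 2).
  assert (He : 0 < e). { unfold e. assert (0 < Rabs (s - t)) by (apply Rabs_pos_lt; lra). lra. }
  destruct (Hs e He) as [l1 H1]. destruct (Ht e He) as [l2 H2].
  destruct (nodup_ex (l1 ++ l2)) as [l [N Hl]].
  assert (I1 : incl l1 l) by (intros a Ha; apply Hl, in_app_iff; auto).
  assert (I2 : incl l2 l) by (intros a Ha; apply Hl, in_app_iff; auto).
  specialize (H1 l N I1). specialize (H2 l N I2).
  assert (Rabs (s - t) <= Rabs (finsum f l - t) + Rabs (finsum f l - s)).
  { replace (s - t) with ((finsum f l - t) - (finsum f l - s)) by ring.
    eapply Rle_trans; [apply Rabs_triang|]. rewrite Rabs_Ropp. lra. }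
  unfold e in *. lra.
Qed.

Lemma HasSum_fin_eq {A} (f : A -> R) l s : NoDup l -> (forall a, ~ In a l -> f a = 0) ->
  HasSum f s -> s = finsum f l.
Proof. intros N H Hs. eapply HasSum_unique; eauto. apply HasSum_fin; auto. Qed.

Lemma finsum_ge_term {A} (f : A -> R) l a : NoDup l -> In a l ->
  (forall b, In b l -> b <> a -> 0 <= f b) -> f a <= finsum f l.
Proof.
  intros N Ha H. destruct (in_split a l Ha) as [u [v ->]].
  rewrite finsum_app; simpl.
  assert (0 <= finsum f u). { apply finsum_nonneg. intros b Hb. apply H. rewrite in_app_iff; auto.
    intro; subst. apply (NoDup_remove_2 _ _ _ N). rewrite in_app_iff; auto. }
  assert (0 <= finsum f v). { apply finsum_nonneg. intros b Hb. apply H. rewrite in_app_iff; simpl; auto.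
    intro; subst. apply (NoDup_remove_2 _ _ _ N). rewrite in_app_iff; auto. }
  lra.
Qed.

Lemma finsum_ge_two {A} (f : A -> R) l a b : NoDup l -> In a l -> In b l -> a <> b ->
  (forall c, In c l -> 0 <= f c) -> f a + f b <= finsum f l.
Proof.
  intros N Ha Hb Hab H. destruct (in_split a l Ha) as [u [v ->]].
  rewrite finsum_app; simpl.
  assert (Hb' : In b (u ++ v)). { rewrite in_app_iff in *. simpl in Hb. destruct Hb as [|[|]]; auto; congruence. }
  assert (N' := NoDup_remove_1 _ _ _ N).
  assert (f b <= finsum f (u ++ v)).
  { apply finsum_ge_term; auto. intros c Hc _. apply H. rewrite in_app_iff in *; simpl; destruct Hc; auto. }
  rewrite finsum_app in H0.
  assert (0 <= f a) by (apply H; rewrite in_app_iff; simpl; auto). lra.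
Qed.

Lemma HasSum_term_le {A} (f : A -> R) s a : HasSum f s -> (forall b, 0 <= f b) -> f a <= s.
Proof.
  intros Hs Hp. apply Rnot_lt_le. intro Hlt.
  destruct (Hs (f a - s)) as [l0 H0]; [lra|].
  destruct (nodup_ex (a :: l0)) as [l [N Hl]].
  assert (I : incl l0 l) by (intros b Hb; apply Hl; simpl; auto).
  specialize (H0 l N I).
  assert (f a <= finsum f l) by (apply finsum_ge_term; auto; apply Hl; simpl; auto).
  assert (finsum f l - s < f a - s) by (apply Rabs_def2 in H0; lra). lra.
Qed.

Lemma HasSum_le_term {A} (f : A -> R) s a : HasSum f s -> (forall b, f b <= 0) -> s <= f a.
Proof.
  intros Hs Hp. apply Rnot_lt_le. intro Hlt.
  destruct (Hs (s - f a)) as [l0 H0]; [lra|].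
  destruct (nodup_ex (a :: l0)) as [l [N Hl]].
  assert (I : incl l0 l) by (intros b Hb; apply Hl; simpl; auto).
  specialize (H0 l N I).
  assert (finsum (fun b => - f b) l >= - f a).
  { apply Rle_ge. apply finsum_ge_term with (f := fun b => - f b); auto. apply Hl; simpl; auto.
    intros; specialize (Hp b); lra. }
  rewrite <- (Rmult_1_l (f a)) in H. 
  assert (finsum (fun b => - f b) l = - finsum f l).
  { rewrite (finsum_ext _ (fun b => (-1) * f b)); [rewrite finsum_scal; ring| intros; ring]. }
  apply Rabs_def2 in H0. lra.
Qed.

Lemma HasSum_zero {A} (f : A -> R) : (forall a, f a = 0) -> HasSum f 0.
Proof. intros H. change 0 with (finsum f []). apply HasSum_fin; auto. constructor. Qed.

Lemma NoDup_prod {A B} (l1 : list A) (l2 : list B) : NoDup l1 -> NoDup l2 -> NoDup (list_prod l1 l2).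
Proof.
  induction l1 as [|a l1 IH]; intros N1 N2; simpl; [constructor|].
  inversion N1; subst. apply NoDup_app; auto.
  - apply NoDup_map_NoDup_ForallPairs; auto. intros x y _ _ H; inversion H; auto.
  - intros p Hp Hp2. apply in_map_iff in Hp. destruct Hp as [b [<- _]].
    apply in_prod_iff in Hp2. destruct Hp2; auto.
Qed.

Lemma finsum_prod {A B} (f : A * B -> R) l1 l2 :
  finsum f (list_prod l1 l2) = finsum (fun a => finsum (fun b => f (a, b)) l2) l1.
Proof. induction l1; simpl; [lra|]. rewrite finsum_app, finsum_map, IHl1. lra. Qed.

Lemma finsum_comm {A B} (f : A -> B -> R) l1 l2 :
  finsum (fun a => finsum (fun b => f a b) l2) l1 = finsum (fun b => finsum (fun a => f a b) l1) l2.
Proof.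
  induction l1; simpl. - symmetry; apply finsum_zero; auto.
  - rewrite IHl1, <- finsum_plus. reflexivity.
Qed.


Definition feas n m B (a : nat -> nat -> R) (b v : nat -> R) :=
  (forall i, In i (List.seq 0 n) -> 0 <= v i /\ v i <= B) /\
  (forall j, In j (List.seq 0 m) ->
     finsum (fun i => a j i * v i) (List.seq 0 n) <= b j).

Definition LPprop := forall n m B (a : nat -> nat -> R) (b c v0 : nat -> R),
  feas n m B a b v0 -> exists v, feas n m B a b v /\
   forall w, feas n m B a b w ->
     finsum (fun i => c i * w i) (List.seq 0 n) <= finsum (fun i => c i * v i) (List.seq 0 n).

Definition feasL {A} (L : list A) B (C : list ((A -> R) * R)) (z : A -> R) :=
  (forall a, In a L -> 0 <= z a /\ z a <= B) /\
  (forall p, In p C -> finsum (fun a => fst p a * z a) L <= snd p).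

Lemma list_nth_map {A} (L : list A) d0 : L = map (fun i => nth i L d0) (List.seq 0 (length L)).
Proof.
  induction L as [|a L IH]; simpl; auto. f_equal.
  rewrite <- seq_shift, map_map. simpl. exact IH.
Qed.

Lemma finsum_nth {A} (L : list A) d0 (f : A -> R) :
  finsum f L = finsum (fun i => f (nth i L d0)) (List.seq 0 (length L)).
Proof. rewrite (list_nth_map L d0) at 1. apply finsum_map. Qed.

Lemma lp_list (LP : LPprop) {A} (L : list A) (d0 : A) (NL : NoDup L) (B : R)
  (C : list ((A -> R) * R)) (c : A -> R) (z0 : A -> R) :
  feasL L B C z0 -> exists z, feasL L B C z /\
    forall w, feasL L B C w -> finsum (fun a => c a * w a) L <= finsum (fun a => c a * z a) L.
Proof.
  intros H0.
  set (n := length L). set (m := length C). set (dC := ((fun _ : A => 0), 0)).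
  set (a' := fun j i => fst (nth j C dC) (nth i L d0)).
  set (b' := fun j => snd (nth j C dC)).
  set (c' := fun i => c (nth i L d0)).
  set (vw := fun (w : A -> R) i => w (nth i L d0)).
  assert (Hin : forall i, In i (List.seq 0 n) -> In (nth i L d0) L).
  { intros i Hi. apply in_seq in Hi. apply nth_In. unfold n in Hi. lia. }
  assert (Hw : forall w, feasL L B C w -> feas n m B a' b' (vw w)).
  { intros w [W1 W2]. split.
    - intros i Hi. apply W1. auto.
    - intros j Hj. apply in_seq in Hj. unfold a', b', vw, n.
      rewrite <- (finsum_nth L d0 (fun a => fst (nth j C dC) a * w a)).
      apply W2. apply nth_In. unfold m in Hj; lia. }
  destruct (LP n m B a' b' c' (vw z0) (Hw z0 H0)) as [v [Hv Hopt]].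
  set (z := fun a => finsum (fun i => if deq (nth i L d0) a then v i else 0) (List.seq 0 n)).
  assert (Hz : forall i, In i (List.seq 0 n) -> z (nth i L d0) = v i).
  { intros i Hi. unfold z.
    rewrite (finsum_perm _ (List.seq 0 n) [i]); [simpl; destruct (deq _ _); [lra|congruence]| apply seq_NoDup | constructor; [intros []| constructor] |].
    intros j Hj. destruct (deq (nth j L d0) (nth i L d0)) as [E|E]; [|congruence].
    split; intros Hj2.
    - apply in_seq in Hi. apply in_seq in Hj2. simpl. left.
      apply (proj1 (NoDup_nth L d0) NL); [unfold n in *; lia | unfold n in *; lia | congruence].
    - simpl in Hj2. destruct Hj2 as [<-|[]]. auto. }
  assert (Hs : forall g, finsum (fun a => g a * z a) L = finsum (fun i => g (nth i L d0) * v i) (List.seq 0 n)).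
  { intros g. rewrite (finsum_nth L d0). apply finsum_ext. intros i Hi. rewrite Hz; auto. }
  exists z. split.
  - split.
    + intros a Ha. destruct (In_nth L a d0 Ha) as [i [Hi <-]].
      rewrite Hz. apply Hv. apply in_seq; lia. apply in_seq; lia.
    + intros p Hp. destruct (In_nth C p dC Hp) as [j [Hj <-]].
      rewrite Hs. apply Hv. apply in_seq. unfold m; lia.
  - intros w Hw'. rewrite Hs. specialize (Hopt _ (Hw w Hw')).
    unfold c', vw in Hopt. rewrite (finsum_nth L d0 (fun a => c a * w a)). exact Hopt.
Qed.


Lemma walk_app {V} (q : V -> V -> R) x y z n m :
  walk q x y n -> walk q y z m -> walk q x z (n + m).
Proof. induction 1; intros Hw; simpl; auto. econstructor; eauto. Qed.

Lemma least_nat (P : nat -> Prop) : (exists n, P n) -> exists n, P n /\ forall m, P m -> (n <= m)%nat.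
Proof.
  intros [n Hn]. revert Hn. induction n as [n IH] using (well_founded_induction lt_wf).
  intros Hn. destruct (classic (exists m, P m /\ (m < n)%nat)) as [[m [Hm Hlt]]|Hno].
  - apply (IH m Hlt Hm).
  - exists n. split; auto. intros m Hm. destruct (le_lt_dec n m); auto. exfalso; eauto.
Qed.

Lemma dist_spec {V} (q : V -> V -> R) x y : (exists n, walk q x y n) -> is_dist q x y (dist q x y).
Proof.
  intros H. unfold dist. apply epsilon_spec. apply least_nat; auto.
Qed.

Section D.
Context {V : Type} (q : V -> V -> R) (Hconn : connected q) (Hq : forall x y, 0 <= q x y).

Lemma dist_walk x y : walk q x y (dist q x y).
Proof. apply (dist_spec q x y (Hconn x y)). Qed.

Lemma dist_min x y n : walk q x y n -> (dist q x y <= n)%nat.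
Proof. apply (dist_spec q x y (Hconn x y)). Qed.

Lemma dist_refl x : dist q x x = 0%nat.
Proof. assert (H := dist_min x x 0 (walk0 q x)). lia. Qed.

Lemma dist_eq0 x y : dist q x y = 0%nat -> x = y.
Proof. intros H. assert (W := dist_walk x y). rewrite H in W. inversion W; auto. Qed.

Lemma dist_tri x y z : (dist q x z <= dist q x y + dist q y z)%nat.
Proof. apply dist_min. apply walk_app with y; apply dist_walk. Qed.

Lemma dist_edge x y : 0 < q x y -> (dist q x y <= 1)%nat.
Proof. intros H. apply dist_min. econstructor; eauto. constructor. Qed.

Context (Hrev : reversible q).

Lemma rev_pos x y : 0 < q x y -> 0 < q y x.
Proof.
  intros H. destruct Hrev as [m [Hm Hs]]. specialize (Hs x y).
  assert (0 < q x y * m x) by (apply Rmult_lt_0_compat; auto).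
  rewrite Hs in H0. destruct (Rle_lt_dec (q y x) 0); auto.
  assert (q y x = 0) by (specialize (Hq y x); lra). rewrite H1 in H0. lra.
Qed.

Lemma walk_rev x y n : walk q x y n -> walk q y x n.
Proof.
  induction 1. constructor.
  replace (S n) with (n + 1)%nat by lia. apply walk_app with z; auto.
  econstructor. apply rev_pos; eauto. constructor.
Qed.

Lemma dist_sym x y : dist q x y = dist q y x.
Proof.
  assert (H1 := dist_min x y _ (walk_rev _ _ _ (dist_walk y x))).
  assert (H2 := dist_min y x _ (walk_rev _ _ _ (dist_walk x y))). lia.
Qed.

Lemma dist_step x y k : dist q x y = S k -> exists z, 0 < q x z /\ dist q z y = k.
Proof.
  intros H. assert (W := dist_walk x y). rewrite H in W. inversion W as [|x' z y' n' Hxz Wz]; subst.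
  exists z. split; auto.
  assert (A1 := dist_min _ _ _ Wz).
  assert (A2 := dist_tri x z y). assert (A3 := dist_edge x z Hxz). lia.
Qed.
End D.


Lemma qmin_le {V} (q : V -> V -> R) (Hq : forall x y, 0 <= q x y) x y : 0 < q x y -> qmin q <= q x y.
Proof.
  intros Hxy.
  set (E := fun r => exists x y, 0 < q x y /\ r = q x y).
  assert (Ex : exists m, is_glb E m).
  { set (E' := fun r => E (- r)).
    assert (Hb : bound E'). { exists 0. intros r [a [b [Hab Hr]]]. lra. }
    assert (Hne : exists r, E' r). { exists (- q x y). unfold E', E. exists x, y. split; auto; ring. }
    destruct (completeness E' Hb Hne) as [m [Hm1 Hm2]].
    exists (- m). split.
    - intros r Hr. assert (E' (- r)) by (unfold E'; rewrite Ropp_involutive; auto).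
      specialize (Hm1 _ H). lra.
    - intros b Hb'. assert (m <= - b). { apply Hm2. intros r Hr. specialize (Hb' _ Hr). lra. } lra. }
  assert (H := epsilon_spec (inhabits 0) (is_glb E) Ex).
  unfold qmin. fold E. apply H. exists x, y; auto.
Qed.

Section Main.
Context {V : Type} (q : V -> V -> R) (Hq : forall x y, 0 <= q x y)
  (Hrev : reversible q) (Hconn : connected q) (LP : LPprop)
  (x0 y0 : V) (Hxy : x0 <> y0)
  (LX LY : list V) (NX : NoDup LX) (NY : NoDup LY)
  (HLX : forall x, In x LX <-> (0 < q x0 x /\ x <> x0))
  (HLY : forall y, In y LY <-> (0 < q y0 y /\ y <> y0)).

Definition dd := dist q x0 y0.
Definition cst x y := INR dd - INR (dist q x y).
Definition ww x y := cst x y - cst x y0 - cst x0 y.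
Definition good x y : bool := Nat.ltb (dd + dist q x y) (dist q x y0 + dist q x0 y).
Definition gz (z : V * V -> R) x y := if good x y then z (x, y) else 0.
Definition rowS z x := finsum (fun y => gz z x y) LY.
Definition colS z y := finsum (fun x => gz z x y) LX.
Definition canon z x y :=
  if excluded_middle_informative (In x LX /\ In y LY) then gz z x y
  else if excluded_middle_informative (In x LX /\ y = y0) then q x0 x - rowS z x
  else if excluded_middle_informative (x = x0 /\ In y LY) then q y0 y - colS z y
  else 0.
Definition K0 := finsum (fun x => q x0 x * cst x y0) LX + finsum (fun y => q y0 y * cst x0 y) LY.
Definition LX' := x0 :: LX.
Definition LY' := y0 :: LY.
Definition PL := list_prod LX' LY'.
Definition PXY := list_prod LX LY.

Lemma x0_nLX : ~ In x0 LX. Proof. intro H; apply HLX in H; tauto. Qed.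
Lemma y0_nLY : ~ In y0 LY. Proof. intro H; apply HLY in H; tauto. Qed.
Lemma NX' : NoDup LX'. Proof. constructor; [apply x0_nLX|auto]. Qed.
Lemma NY' : NoDup LY'. Proof. constructor; [apply y0_nLY|auto]. Qed.
Lemma NPL : NoDup PL. Proof. apply NoDup_prod; [apply NX'|apply NY']. Qed.
Lemma NPXY : NoDup PXY. Proof. apply NoDup_prod; auto. Qed.

Lemma finsum_scal_r {A} (f : A -> R) c l : finsum (fun a => f a * c) l = finsum f l * c.
Proof. rewrite (finsum_ext _ (fun a => c * f a)); [rewrite finsum_scal; ring| intros; ring]. Qed.

Lemma cost_decomp (rho : V -> V -> R)
  (Hrow : forall x, In x LX -> rho x y0 + finsum (rho x) LY = q x0 x)
  (Hcol : forall y, In y LY -> rho x0 y + finsum (fun x => rho x y) LX = q y0 y) :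
  finsum (cost_family q x0 y0 rho) PL =
  K0 + finsum (fun x => finsum (fun y => rho x y * ww x y) LY) LX.
Proof.
  unfold PL, LX', LY'. rewrite finsum_prod. simpl.
  unfold cost_family; simpl. fold dd.
  replace (INR dd - INR dd) with 0 by ring.
  change (fun b => rho x0 b * (INR dd - INR (dist q x0 b))) with (fun b => rho x0 b * cst x0 b).
  assert (E1 : finsum (fun y => rho x0 y * cst x0 y) LY =
     finsum (fun y => q y0 y * cst x0 y) LY - finsum (fun x => finsum (fun y => rho x y * cst x0 y) LY) LX).
  { rewrite (finsum_comm (fun x y => rho x y * cst x0 y)), <- finsum_minus. apply finsum_ext.
    intros y Hy. rewrite finsum_scal_r, <- (Hcol y Hy). ring. }
  assert (E2 : finsum (fun a => rho a y0 * (INR dd - INR (dist q a y0)) +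
         finsum (fun b => rho a b * (INR dd - INR (dist q a b))) LY) LX =
     finsum (fun x => q x0 x * cst x y0) LX - finsum (fun x => finsum (fun y => rho x y * cst x y0) LY) LX
     + finsum (fun x => finsum (fun y => rho x y * cst x y) LY) LX).
  { rewrite <- finsum_minus, <- finsum_plus. apply finsum_ext. intros x Hx.
    rewrite finsum_scal_r, <- (Hrow x Hx). unfold cst. ring. }
  rewrite E1, E2. unfold K0, ww.
  assert (E3 : finsum (fun x => finsum (fun y => rho x y * (cst x y - cst x y0 - cst x0 y)) LY) LX =
    finsum (fun x => finsum (fun y => rho x y * cst x y) LY) LX
    - finsum (fun x => finsum (fun y => rho x y * cst x y0) LY) LX
    - finsum (fun x => finsum (fun y => rho x y * cst x0 y) LY) LX).
  { rewrite <- !finsum_minus. apply finsum_ext. intros x _. rewrite <- !finsum_minus.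
    apply finsum_ext. intros; ring. }
  rewrite E3. ring.
Qed.

Lemma plan_supp rho : transport_plan q x0 y0 rho -> forall x y, rho x y <> 0 -> In x LX' /\ In y LY'.
Proof.
  intros [Hnn [Hr Hc]] x y Hne. split.
  - destruct (classic (In x LX')) as [|Hn]; auto. exfalso.
    assert (Hx : x <> x0) by (intro; subst; apply Hn; simpl; auto).
    assert (Hq0 : q x0 x = 0). { destruct (Rle_lt_dec (q x0 x) 0). specialize (Hq x0 x); lra.
      exfalso; apply Hn; right; apply HLX; auto. }
    assert (H := HasSum_term_le _ _ y (Hr x Hx) (Hnn x)). specialize (Hnn x y). rewrite Hq0 in H. lra.
  - destruct (classic (In y LY')) as [|Hn]; auto. exfalso.
    assert (Hy : y <> y0) by (intro; subst; apply Hn; simpl; auto).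
    assert (Hq0 : q y0 y = 0). { destruct (Rle_lt_dec (q y0 y) 0). specialize (Hq y0 y); lra.
      exfalso; apply Hn; right; apply HLY; auto. }
    assert (H := HasSum_term_le _ _ x (Hc y Hy) (fun b => Hnn b y)). specialize (Hnn x y). rewrite Hq0 in H. lra.
Qed.

Lemma plan_row rho : transport_plan q x0 y0 rho -> forall x, In x LX -> rho x y0 + finsum (rho x) LY = q x0 x.
Proof.
  intros Hp x Hx. assert (Hx0 : x <> x0) by (apply HLX in Hx; tauto).
  destruct Hp as [Hnn [Hr Hc]] eqn:E.
  rewrite (HasSum_fin_eq (rho x) LY' (q x0 x)); auto. apply NY'.
  intros y Hy. destruct (Req_dec (rho x y) 0); auto. exfalso. apply Hy. apply (plan_supp rho Hp x y H).
Qed.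

Lemma plan_col rho : transport_plan q x0 y0 rho -> forall y, In y LY -> rho x0 y + finsum (fun x => rho x y) LX = q y0 y.
Proof.
  intros Hp y Hy. assert (Hy0 : y <> y0) by (apply HLY in Hy; tauto).
  destruct Hp as [Hnn [Hr Hc]] eqn:E.
  rewrite (HasSum_fin_eq (fun x => rho x y) LX' (q y0 y)); auto. apply NX'.
  intros x Hx. destruct (Req_dec (rho x y) 0); auto. exfalso. apply Hx. apply (plan_supp rho Hp x y H).
Qed.

Lemma plan_cost rho c : transport_plan q x0 y0 rho -> HasSum (cost_family q x0 y0 rho) c ->
  c = finsum (cost_family q x0 y0 rho) PL.
Proof.
  intros Hp Hs. apply HasSum_fin_eq; auto. apply NPL.
  intros [x y] Hn. unfold cost_family; simpl. destruct (Req_dec (rho x y) 0) as [E|E].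
  rewrite E; ring. exfalso. apply Hn. unfold PL. apply in_prod_iff. apply (plan_supp rho Hp x y E).
Qed.

Lemma dX x : In x LX -> (dist q x0 x <= 1)%nat /\ (dist q x x0 <= 1)%nat.
Proof. intros Hx. apply HLX in Hx. destruct Hx as [Hx _].
  split; apply dist_edge; auto. apply rev_pos; auto. Qed.

Lemma dY y : In y LY -> (dist q y0 y <= 1)%nat /\ (dist q y y0 <= 1)%nat.
Proof. intros Hy. apply HLY in Hy. destruct Hy as [Hy _].
  split; apply dist_edge; auto. apply rev_pos; auto. Qed.

Definition Bq := finsum (q x0) LX.
Definition rowind x := fun p : V * V => if deq (fst p) x then (if good (fst p) (snd p) then 1 else 0) else 0.
Definition colind y := fun p : V * V => if deq (snd p) y then (if good (fst p) (snd p) then 1 else 0) else 0.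
Definition CC := map (fun x => (rowind x, q x0 x)) LX ++ map (fun y => (colind y, q y0 y)) LY.
Definition cLP (p : V * V) := if good (fst p) (snd p) then ww (fst p) (snd p) else 0.

Lemma rowind_sum z x : In x LX -> finsum (fun p => rowind x p * z p) PXY = rowS z x.
Proof.
  intros Hx. unfold PXY. rewrite finsum_prod.
  rewrite (finsum_perm _ LX [x]); auto.
  - simpl. rewrite Rplus_0_r. unfold rowS. apply finsum_ext. intros y _.
    unfold rowind, gz; simpl. destruct (deq x x); [|congruence]. destruct (good x y); ring.
  - constructor; [intros []|constructor].
  - intros x' Hne. destruct (deq x' x) as [->|Hn]; [split; intros _; simpl; auto|].
    exfalso. apply Hne. apply finsum_zero.
    intros y _. unfold rowind; simpl. destruct (deq x' x); [congruence|ring].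
Qed.

Lemma colind_sum z y : In y LY -> finsum (fun p => colind y p * z p) PXY = colS z y.
Proof.
  intros Hy. unfold PXY. rewrite finsum_prod. unfold colS. apply finsum_ext. intros x _.
  rewrite (finsum_perm _ LY [y]); auto.
  - simpl. rewrite Rplus_0_r. unfold colind, gz; simpl. destruct (deq y y); [|congruence]. destruct (good x y); ring.
  - constructor; [intros []|constructor].
  - intros y' Hne. destruct (deq y' y) as [->|Hn]; [split; intros _; simpl; auto|].
    exfalso. apply Hne.
    unfold colind; simpl. destruct (deq y' y); [congruence|ring].
Qed.

Lemma obj_sum z : finsum (fun p => cLP p * z p) PXY = finsum (fun x => finsum (fun y => gz z x y * ww x y) LY) LX.
Proof.
  unfold PXY. rewrite finsum_prod. apply finsum_ext. intros x _. apply finsum_ext. intros y _.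
  unfold cLP, gz; simpl. destruct (good x y); ring.
Qed.

Lemma feas_row z : feasL PXY Bq CC z -> forall x, In x LX -> rowS z x <= q x0 x.
Proof.
  intros [_ H] x Hx. rewrite <- rowind_sum; auto.
  apply (H (rowind x, q x0 x)). unfold CC. apply in_app_iff. left. apply in_map_iff. eauto.
Qed.

Lemma feas_col z : feasL PXY Bq CC z -> forall y, In y LY -> colS z y <= q y0 y.
Proof.
  intros [_ H] y Hy. rewrite <- colind_sum; auto.
  apply (H (colind y, q y0 y)). unfold CC. apply in_app_iff. right. apply in_map_iff. eauto.
Qed.

Lemma gz_nonneg z : feasL PXY Bq CC z -> forall x y, In x LX -> In y LY -> 0 <= gz z x y.
Proof.
  intros [H _] x y Hx Hy. unfold gz. destruct (good x y); [|lra].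
  apply (H (x, y)). apply in_prod; auto.
Qed.

Lemma C1 z x y : In x LX -> In y LY -> canon z x y = gz z x y.
Proof. intros Hx Hy. unfold canon. destruct (excluded_middle_informative _); [reflexivity|exfalso; tauto]. Qed.

Lemma C2 z x : In x LX -> canon z x y0 = q x0 x - rowS z x.
Proof. intros Hx. unfold canon. destruct (excluded_middle_informative _) as [[_ H]|_].
  exfalso; apply y0_nLY; auto. destruct (excluded_middle_informative _); [reflexivity|exfalso; tauto]. Qed.

Lemma C3 z y : In y LY -> canon z x0 y = q y0 y - colS z y.
Proof. intros Hy. unfold canon. destruct (excluded_middle_informative _) as [[H _]|_].
  exfalso; apply x0_nLX; auto. destruct (excluded_middle_informative _) as [[H _]|_].
  exfalso; apply x0_nLX; auto. destruct (excluded_middle_informative _); [reflexivity|exfalso; tauto]. Qed.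

Lemma C4 z x y : ~ (In x LX' /\ In y LY') -> canon z x y = 0.
Proof. intros Hn. unfold canon, LX', LY' in *; simpl in *.
  destruct (excluded_middle_informative _) as [[]|_]; [exfalso; apply Hn; subst; split; auto|].
  destruct (excluded_middle_informative _) as [[]|_]; [exfalso; apply Hn; subst; split; auto|].
  destruct (excluded_middle_informative _) as [[]|_]; [exfalso; apply Hn; subst; split; auto|]. auto. Qed.

Lemma canon_nonneg z : feasL PXY Bq CC z -> forall x y, 0 <= canon z x y.
Proof.
  intros Hf x y. unfold canon.
  destruct (excluded_middle_informative _) as [[Hx Hy]|_]; [apply gz_nonneg; auto|].
  destruct (excluded_middle_informative _) as [[Hx _]|_]; [assert (H := feas_row z Hf x Hx); lra|].
  destruct (excluded_middle_informative _) as [[_ Hy]|_]; [assert (H := feas_col z Hf y Hy); lra|]. lra.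
Qed.

Lemma canon_row z x : In x LX -> canon z x y0 + finsum (canon z x) LY = q x0 x.
Proof.
  intros Hx. rewrite C2; auto. rewrite (finsum_ext _ (gz z x)). change (finsum (gz z x) LY) with (rowS z x); ring.
  intros; apply C1; auto.
Qed.

Lemma canon_col z y : In y LY -> canon z x0 y + finsum (fun x => canon z x y) LX = q y0 y.
Proof.
  intros Hy. rewrite C3; auto. rewrite (finsum_ext _ (fun x => gz z x y)). unfold colS; ring.
  intros; apply C1; auto.
Qed.

Lemma canon_plan z : feasL PXY Bq CC z -> transport_plan q x0 y0 (canon z).
Proof.
  intros Hf. split; [apply canon_nonneg; auto|split].
  - intros x Hx0. destruct (classic (In x LX)) as [Hx|Hx].
    + rewrite <- (canon_row z x Hx). change (canon z x y0 + finsum (canon z x) LY) with (finsum (canon z x) LY').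
      apply HasSum_fin. apply NY'. intros y Hy. apply C4. intros [_ H]; auto.
    + assert (E : q x0 x = 0). { destruct (Rle_lt_dec (q x0 x) 0). specialize (Hq x0 x); lra.
        exfalso; apply Hx, HLX; auto. }
      rewrite E. apply HasSum_zero. intros y. apply C4. intros [[H|H] _]; auto.
  - intros y Hy0. destruct (classic (In y LY)) as [Hy|Hy].
    + rewrite <- (canon_col z y Hy). change (canon z x0 y + finsum (fun x => canon z x y) LX) with (finsum (fun x => canon z x y) LX').
      apply HasSum_fin. apply NX'. intros x Hx. apply C4. intros [H _]; auto.
    + assert (E : q y0 y = 0). { destruct (Rle_lt_dec (q y0 y) 0). specialize (Hq y0 y); lra.
        exfalso; apply Hy, HLY; auto. }
      rewrite E. apply HasSum_zero. intros x. apply C4. intros [_ [H|H]]; auto.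
Qed.

Lemma canon_cost z : feasL PXY Bq CC z ->
  HasSum (cost_family q x0 y0 (canon z)) (K0 + finsum (fun p => cLP p * z p) PXY).
Proof.
  intros Hf. rewrite obj_sum.
  rewrite (finsum_ext (fun x => finsum (fun y => gz z x y * ww x y) LY) (fun x => finsum (fun y => canon z x y * ww x y) LY)).
  2:{ intros x Hx. apply finsum_ext. intros y Hy. rewrite C1; auto. }
  rewrite <- cost_decomp. apply HasSum_fin. apply NPL.
  - intros [x y] Hn. unfold cost_family; simpl. rewrite C4; [ring|]. intros H. apply Hn. apply in_prod; tauto.
  - apply canon_row.
  - apply canon_col.
Qed.

Definition zr (rho : V -> V -> R) (p : V * V) := rho (fst p) (snd p).

Lemma gz_le rho x y : (forall a b, 0 <= rho a b) -> gz (zr rho) x y <= rho x y.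
Proof. intros H. unfold gz, zr; simpl. destruct (good x y); [lra|apply H]. Qed.

Lemma plan_feas rho : transport_plan q x0 y0 rho -> feasL PXY Bq CC (zr rho).
Proof.
  intros Hp. assert (Hnn := proj1 Hp). split.
  - intros [x y] Hxy'. apply in_prod_iff in Hxy'. destruct Hxy' as [Hx Hy]. unfold zr; simpl.
    split; [apply Hnn|].
    assert (A1 : rho x y <= finsum (rho x) LY) by (apply finsum_ge_term; auto).
    assert (A2 := plan_row rho Hp x Hx). assert (A3 := Hnn x y0).
    assert (A4 : q x0 x <= Bq) by (apply finsum_ge_term; auto).
    lra.
  - intros p Hp'. unfold CC in Hp'. apply in_app_iff in Hp'. destruct Hp' as [Hp'|Hp'];
      apply in_map_iff in Hp'; destruct Hp' as [v [<- Hv]]; simpl.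
    + rewrite rowind_sum; auto. unfold rowS.
      assert (A1 : finsum (fun y => gz (zr rho) v y) LY <= finsum (rho v) LY) by (apply finsum_le; intros; apply gz_le; auto).
      assert (A2 := plan_row rho Hp v Hv). assert (A3 := Hnn v y0). lra.
    + rewrite colind_sum; auto. unfold colS.
      assert (A1 : finsum (fun x => gz (zr rho) x v) LX <= finsum (fun x => rho x v) LX) by (apply finsum_le; intros; apply gz_le; auto).
      assert (A2 := plan_col rho Hp v Hv). assert (A3 := Hnn x0 v). lra.
Qed.

Lemma ww_nonpos x y : good x y = false -> ww x y <= 0.
Proof.
  intros H. unfold good in H. apply Nat.ltb_ge in H. apply le_INR in H. rewrite !plus_INR in H.
  unfold ww, cst. lra.
Qed.

Lemma plan_cost_le rho c : transport_plan q x0 y0 rho -> HasSum (cost_family q x0 y0 rho) c ->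
  c <= K0 + finsum (fun p => cLP p * zr rho p) PXY.
Proof.
  intros Hp Hs. rewrite (plan_cost rho c Hp Hs), cost_decomp, obj_sum.
  2: apply plan_row; auto. 2: apply plan_col; auto.
  apply Rplus_le_compat_l. apply finsum_le. intros x _. apply finsum_le. intros y _.
  unfold gz, zr; simpl. destruct (good x y) eqn:G; [lra|].
  assert (W := ww_nonpos x y G). assert (N := proj1 Hp x y).
  rewrite Rmult_0_l. assert (0 <= rho x y * - ww x y) by (apply Rmult_le_pos; lra). lra.
Qed.

Lemma exists_opt : exists z, feasL PXY Bq CC z /\ optimal_plan q x0 y0 (canon z).
Proof.
  assert (F0 : feasL PXY Bq CC (fun _ => 0)).
  { split.
    - intros a _. split; [lra|]. apply finsum_nonneg. intros; auto.
    - intros p Hp. rewrite finsum_zero; [|intros; ring]. unfold CC in Hp. apply in_app_iff in Hp.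
      destruct Hp as [Hp|Hp]; apply in_map_iff in Hp; destruct Hp as [v [<- _]]; simpl; auto. }
  destruct (lp_list LP PXY (x0, y0) NPXY Bq CC cLP _ F0) as [z [Hz Hopt]].
  exists z. split; auto. split; [apply canon_plan; auto|].
  exists (K0 + finsum (fun p => cLP p * z p) PXY). split; [apply canon_cost; auto|].
  intros rho' c' Hp Hs. eapply Rle_trans; [apply (plan_cost_le rho' c' Hp Hs)|].
  apply Rplus_le_compat_l. apply Hopt. apply plan_feas; auto.
Qed.

Lemma canon_near z x y : canon z x y <> 0 -> (dd <= dist q x y + 1)%nat /\ (dist q x y <= dd + 1)%nat.
Proof.
  unfold canon, dd. intros Hne.
  destruct (excluded_middle_informative _) as [[Hx Hy]|_].
  - unfold gz in Hne. destruct (good x y) eqn:G; [|lra]. unfold good, dd in G. apply Nat.ltb_lt in G.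
    destruct (dX x Hx). destruct (dY y Hy).
    assert (T1 := dist_tri q Hconn x x0 y0). assert (T2 := dist_tri q Hconn x0 y0 y).
    assert (T3 := dist_tri q Hconn x y y0). assert (T4 := dist_tri q Hconn x0 x y). lia.
  - destruct (excluded_middle_informative _) as [[Hx ->]|_].
    + destruct (dX x Hx).
      assert (T1 := dist_tri q Hconn x0 x y0). assert (T2 := dist_tri q Hconn x x0 y0). lia.
    + destruct (excluded_middle_informative _) as [[-> Hy]|_]; [|lra].
      destruct (dY y Hy).
      assert (T1 := dist_tri q Hconn x0 y y0). assert (T2 := dist_tri q Hconn x0 y0 y). lia.
Qed.

Lemma mu_zero z k : (Z.abs k > 1)%Z -> forall p, mu_family q x0 y0 (canon z) k p = 0.
Proof.
  intros Hk [x y]. unfold mu_family; simpl. destruct (Z.eq_dec _ _) as [E|]; auto.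
  destruct (Req_dec (canon z x y) 0) as [|Hne]; auto. exfalso.
  destruct (canon_near z x y Hne) as [A B]. unfold dd in *. lia.
Qed.

Lemma part1 : exists rho, optimal_plan q x0 y0 rho /\
       (forall k : Z, (Z.abs k > 1)%Z -> HasSum (mu_family q x0 y0 rho k) 0) /\
       (exists s, HasSum (mu_family q x0 y0 rho (-1)%Z) s /\ 2 * qmin q <= s).
Proof.
  destruct exists_opt as [z [Hf Hopt]]. exists (canon z). split; auto. split.
  { intros k Hk. apply HasSum_zero. apply mu_zero; auto. }
  destruct (dist q x0 y0) as [|k] eqn:Ed.
  { exfalso. apply Hxy. apply (dist_eq0 q Hconn _ _ Ed). }
  destruct (dist_step q Hconn x0 y0 k Ed) as [x1 [Hx1 Dx1]].
  assert (Ed' : dist q y0 x0 = S k) by (rewrite <- (dist_sym q Hconn Hq Hrev); auto).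
  destruct (dist_step q Hconn y0 x0 k Ed') as [y1 [Hy1 Dy1]].
  rewrite (dist_sym q Hconn Hq Hrev) in Dy1.
  assert (Nx : x1 <> x0) by (intro E; rewrite E in Dx1; lia).
  assert (Ny : y1 <> y0) by (intro E; rewrite E in Dy1; lia).
  assert (Ix : In x1 LX) by (apply HLX; auto).
  assert (Iy : In y1 LY) by (apply HLY; auto).
  assert (R1 : rowS z x1 = 0).
  { apply finsum_zero. intros y Hy. unfold gz. destruct (good x1 y) eqn:G; auto. exfalso.
    unfold good, dd in G. apply Nat.ltb_lt in G. destruct (dX x1 Ix).
    assert (T := dist_tri q Hconn x0 x1 y). lia. }
  assert (R2 : colS z y1 = 0).
  { apply finsum_zero. intros x Hx. unfold gz. destruct (good x y1) eqn:G; auto. exfalso.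
    unfold good, dd in G. apply Nat.ltb_lt in G. destruct (dY y1 Iy).
    assert (T := dist_tri q Hconn x y1 y0). lia. }
  exists (finsum (mu_family q x0 y0 (canon z) (-1)%Z) PL). split.
  { apply HasSum_fin. apply NPL. intros [x y] Hn. unfold mu_family; simpl.
    destruct (Z.eq_dec _ _); auto. apply C4. intros H; apply Hn, in_prod; tauto. }
  assert (M1 : mu_family q x0 y0 (canon z) (-1)%Z (x1, y0) = q x0 x1).
  { unfold mu_family; simpl. destruct (Z.eq_dec _ _) as [|E]. rewrite C2, R1; auto; ring.
    exfalso. apply E. rewrite Dx1, Ed. lia. }
  assert (M2 : mu_family q x0 y0 (canon z) (-1)%Z (x0, y1) = q y0 y1).
  { unfold mu_family; simpl. destruct (Z.eq_dec _ _) as [|E]. rewrite C3, R2; auto; ring.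
    exfalso. apply E. rewrite Dy1, Ed. lia. }
  assert (G := finsum_ge_two (mu_family q x0 y0 (canon z) (-1)%Z) PL (x1, y0) (x0, y1) NPL).
  rewrite M1, M2 in G.
  assert (Q1 := qmin_le q Hq x0 x1 Hx1). assert (Q2 := qmin_le q Hq y0 y1 Hy1).
  assert (q x0 x1 + q y0 y1 <= finsum (mu_family q x0 y0 (canon z) (-1)%Z) PL).
  { apply G.
    - apply in_prod; [right; auto| left; auto].
    - apply in_prod; [left; auto| right; auto].
    - intros E; inversion E; auto.
    - intros [a b] _. unfold mu_family; simpl. destruct (Z.eq_dec _ _); [apply canon_nonneg; auto| lra]. }
  lra.
Qed.
End Main.


Lemma nbr_list {V} (q : V -> V -> R) (Hfin : forall x, exists l : list V, forall y, 0 < q x y -> In y l) x0 :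
  exists L, NoDup L /\ forall x, In x L <-> (0 < q x0 x /\ x <> x0).
Proof.
  destruct (Hfin x0) as [l Hl].
  set (P := fun x => if excluded_middle_informative (0 < q x0 x /\ x <> x0) then true else false).
  exists (nodup deq (filter P l)). split; [apply NoDup_nodup|].
  intros x. rewrite nodup_In, filter_In. unfold P.
  destruct (excluded_middle_informative _) as [H|H]; split; intros H'.
  - auto.
  - split; [apply Hl; tauto|auto].
  - destruct H'; discriminate.
  - tauto.
Qed.

Lemma part2 {V} (q : V -> V -> R) (Hq : forall x y, 0 <= q x y) (Hconn : connected q) :
  forall (x0 : V) (rho : V -> V -> R), optimal_plan q x0 x0 rho ->
     forall k : Z, k <> 0%Z -> HasSum (mu_family q x0 x0 rho k) 0.
Proof.
  intros x0 rho [Hp [c [Hc Hopt]]] k Hk.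
  set (diag := fun x y => if deq x y then q x0 x else 0).
  assert (Hd : transport_plan q x0 x0 diag).
  { split; [|split].
    - intros x y. unfold diag. destruct (deq x y); auto; lra.
    - intros x _. replace (q x0 x) with (finsum (diag x) [x]).
      + apply HasSum_fin. constructor; [intros []|constructor].
        intros y Hy. unfold diag. destruct (deq x y); auto. subst; exfalso; apply Hy; simpl; auto.
      + simpl. unfold diag. destruct (deq x x); [ring|congruence].
    - intros y _. replace (q x0 y) with (finsum (fun x => diag x y) [y]).
      + apply HasSum_fin. constructor; [intros []|constructor].
        intros x Hx. unfold diag. destruct (deq x y); auto. subst; exfalso; apply Hx; simpl; auto.
      + simpl. unfold diag. destruct (deq y y); [ring|congruence]. }
  assert (Hdc : HasSum (cost_family q x0 x0 diag) 0).
  { apply HasSum_zero. intros [x y]. unfold cost_family, diag; simpl.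
    destruct (deq x y); [subst; rewrite !(dist_refl q Hconn); ring| ring]. }
  assert (Hc0 := Hopt diag 0 Hd Hdc).
  assert (Hneg : forall p, cost_family q x0 x0 rho p <= 0).
  { intros [x y]. unfold cost_family; simpl. rewrite (dist_refl q Hconn). simpl.
    assert (0 <= rho x y) by apply Hp. assert (0 <= INR (dist q x y)) by apply pos_INR.
    assert (0 <= rho x y * INR (dist q x y)) by (apply Rmult_le_pos; auto). lra. }
  apply HasSum_zero. intros [x y]. unfold mu_family; simpl. destruct (Z.eq_dec _ _) as [E|]; auto.
  rewrite (dist_refl q Hconn) in E.
  assert (Hdxy : dist q x y <> 0%nat) by lia.
  destruct (Req_dec (rho x y) 0) as [|Hne]; auto. exfalso.
  assert (T := HasSum_le_term _ _ (x, y) Hc Hneg). unfold cost_family in T; simpl in T.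
  rewrite (dist_refl q Hconn) in T. simpl in T.
  assert (0 < rho x y) by (destruct (proj1 Hp x y); auto; congruence).
  assert (0 < INR (dist q x y)) by (apply lt_0_INR; lia).
  assert (0 < rho x y * INR (dist q x y)) by (apply Rmult_lt_0_compat; auto). lra.
Qed.

Theorem main_LP (LP : LPprop) (V : Type) (q : V -> V -> R)
  (HV : exists e : V -> nat, forall a b, e a = e b -> a = b)
  (Hq : forall x y, 0 <= q x y)
  (Hfin : forall x, exists l : list V, forall y, 0 < q x y -> In y l)
  (Hrev : reversible q)
  (Hconn : connected q) :
  (forall x0 y0 : V, x0 <> y0 ->
     exists rho, optimal_plan q x0 y0 rho /\
       (forall k : Z, (Z.abs k > 1)%Z -> HasSum (mu_family q x0 y0 rho k) 0) /\
       (exists s, HasSum (mu_family q x0 y0 rho (-1)%Z) s /\ 2 * qmin q <= s)) /\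
  (forall (x0 : V) (rho : V -> V -> R), optimal_plan q x0 x0 rho ->
     forall k : Z, k <> 0%Z -> HasSum (mu_family q x0 x0 rho k) 0).
Proof.
  split; [|apply part2; auto].
  intros x0 y0 Hxy.
  destruct (nbr_list q Hfin x0) as [LX [NX HLX]].
  destruct (nbr_list q Hfin y0) as [LY [NY HLY]].
  exact (part1 q Hq Hrev Hconn LP x0 y0 Hxy LX LY NX NY HLX HLY).
Qed.

From Stdlib Require Import Reals List Lia.
From HB Require Import structures.
From mathcomp Require Import all_boot all_order all_algebra.
From mathcomp Require Import all_classical all_reals all_analysis.
From mathcomp Require Import Rstruct Rstruct_topology.
Import Order.TTheory GRing.Theory Num.Theory.
Import numFieldNormedType.Exports.

Lemma seq_iota s n : List.seq s n = iota s n.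
Proof. by elim: n s => //= n IH s; rewrite IH. Qed.

Lemma finsum_big (g : nat -> R) n :
  finsum g (List.seq 0 n) = (\sum_(i < n) g i)%R.
Proof.
rewrite seq_iota -(big_mkord xpredT) /index_iota subn0.
elim: (iota 0 n) => [|x l IH]; first by rewrite big_nil.
by rewrite big_cons /= IH.
Qed.

Local Open Scope classical_set_scope.
Local Open Scope ring_scope.

Lemma lin_cont n (g : 'I_n -> R) :
  continuous (fun r : 'rV[R]_n => \sum_(i < n) g i * r ord0 i).
Proof.
apply: continuous_big.
  first [ exact: (@add_continuous _ R^o) | exact: (@add_continuous R^o) | exact: (@add_continuous R) | exact: (@add_continuous _ R)].
move=> i _ x; apply: continuousM; first exact: cst_continuous.
exact: coord_continuous.
Qed.

Lemma lp_max_mc n m (B : R) (a : 'I_m -> 'I_n -> R) (b : 'I_m -> R) (c : 'I_n -> R)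
  (r0 : 'rV[R]_n) :
  let K := [set r : 'rV[R]_n | (forall i, `[0, B]%classic (r ord0 i)) /\
             forall j, \sum_(i < n) a j i * r ord0 i <= b j] in
  K r0 -> exists2 r, K r & forall t, K t ->
     \sum_(i < n) c i * t ord0 i <= \sum_(i < n) c i * r ord0 i.
Proof.
move=> K Kr0.
have -> : K = [set r : 'rV[R]_n | forall i, `[0, B]%classic (r ord0 i)] `&`
    \bigcap_(j in setT) [set r : 'rV[R]_n | \sum_(i < n) a j i * r ord0 i <= b j].
  by apply/seteqP; split => r /= [H1 H2]; split => // j; [move=> _|]; apply: H2.
set K' := _ `&` _.
have cK : compact K'.
  apply: compact_closedI.
    apply: (@rV_compact _ _ (fun=> `[0, B]%classic)) => i; exact: segment_compact.
  apply: closed_bigI => j _.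
  apply: (@preimage_closed _ _ (fun r : 'rV[R]_n => \sum_(i < n) a j i * r ord0 i)
     [set x | x <= b j]).
    by move=> x _; apply: lin_cont.
  exact: closed_le.
have K0 : K' !=set0.
  exists r0; split; first by case: Kr0.
  by move=> j _; case: Kr0 => _; apply.
have [r rK rmax] := EVT_max_rV K0 cK
  (continuous_subspaceT (@lin_cont n c)).
exists r; first by move: rK; rewrite inE.
by move=> t tK; apply: rmax; rewrite inE.
Qed.

Lemma in_seq0 i n : In i (List.seq 0 n) <-> (i < n)%N.
Proof.
rewrite in_seq; split => [[_ H]|H]; first by apply/ssrnat.ltP; lia.
by move/ssrnat.ltP: H => H; lia.
Qed.


Local Close Scope classical_set_scope.
Local Open Scope R_scope.

Lemma lp_max n m B (a : nat -> nat -> R) (b c v0 : nat -> R) :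
  feas n m B a b v0 -> exists v, feas n m B a b v /\
   forall w, feas n m B a b w ->
     finsum (fun i => c i * w i) (List.seq 0 n) <= finsum (fun i => c i * v i) (List.seq 0 n).
Proof.
move=> Hv0.
pose rw := fun w : nat -> R => (\row_(i < n) w i : 'rV[R]_n).
have Hs : forall (g w : nat -> R), finsum (fun i => g i * w i) (List.seq 0 n)
    = (\sum_(i < n) g i * (rw w) ord0 i)%R.
  by move=> g w; rewrite finsum_big; apply: eq_bigr => i _; rewrite mxE.
have Kw : forall w, feas n m B a b w ->
   ((forall i : 'I_n, `[0, B]%classic ((rw w) ord0 i)) /\
    forall j : 'I_m, (\sum_(i < n) a j i * (rw w) ord0 i <= b j)%R).
  move=> w [H1 H2]; split.
    move=> i; rewrite /= mxE in_itv /=.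
    have Hi : In (nat_of_ord i) (List.seq 0 n) by apply/in_seq0; exact: ltn_ord.
    have [Ha Hb] := H1 _ Hi.
    by apply/andP; split; apply/RleP.
  move=> j; rewrite -Hs; apply/RleP; apply: H2; apply/in_seq0; exact: ltn_ord.
have [r [rK1 rK2] rmax] := @lp_max_mc n m B (fun (j : 'I_m) (i : 'I_n) => a j i)
   (fun j : 'I_m => b j) (fun i : 'I_n => c i) (rw v0) (Kw v0 Hv0).
pose v := fun i : nat => oapp (fun k : 'I_n => r ord0 k) 0 (insub i).
have Hv : forall i : 'I_n, v i = r ord0 i by move=> i; rewrite /v valK.
have Hrv : forall g : nat -> R, finsum (fun i => g i * v i) (List.seq 0 n)
    = (\sum_(i < n) g i * r ord0 i)%R.
  by move=> g; rewrite finsum_big; apply: eq_bigr => i _; rewrite Hv.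
exists v; split.
  split.
    move=> i /in_seq0 Hi.
    have := rK1 (Ordinal Hi); rewrite /= in_itv /= -(Hv (Ordinal Hi)) /=.
    by case/andP => /RleP H1 /RleP H2.
  move=> j /in_seq0 Hj; rewrite Hrv; apply/RleP; exact: (rK2 (Ordinal Hj)).
move=> w Hw; rewrite Hs Hrv; apply/RleP; apply: rmax.
exact: Kw.
Qed.


Require Import Defs.
Open Scope R_scope.
Delimit Scope Z_scope with Z.

Theorem mainTheorem1 (V : Type) (q : V -> V -> R)
  (HV : exists e : V -> nat, forall a b, e a = e b -> a = b)
  (Hq : forall x y, 0 <= q x y)
  (Hfin : forall x, exists l : list V, forall y, 0 < q x y -> In y l)
  (Hrev : reversible q)
  (Hconn : connected q) :
  (forall x0 y0 : V, x0 <> y0 ->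
     exists rho, optimal_plan q x0 y0 rho /\
       (forall k : Z, (Z.abs k > 1)%Z -> HasSum (mu_family q x0 y0 rho k) 0) /\
       (exists s, HasSum (mu_family q x0 y0 rho (-1)%Z) s /\ 2 * qmin q <= s)) /\
  (forall (x0 : V) (rho : V -> V -> R), optimal_plan q x0 x0 rho ->
     forall k : Z, k <> 0%Z -> HasSum (mu_family q x0 x0 rho k) 0).
Proof. exact (main_LP lp_max V q HV Hq Hfin Hrev Hconn). Qed.
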